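(* Let $\mathcal{F}$ be a fixed hypergraph on $k$ vertices and let $\mathcal{H}$ be a hypergraph on at least $k$ vertices. Then: (1) $\hat{\mathcal{H}}^{k+1}$ has no edge-induced subhypergraph isomorphic to $\mathcal{F}$; (2) if $\mathcal{F}$ has at least one hyperedge, $\hat{\mathcal{H}}^{k+1}$ has no restriction isomorphic to $\mathcal{F}$; (3) if there exists $\ell\le k$ such that $\mathcal{F}$ has strictly fewer than $\binom{k-1}{\ell-1}$ hyperedges of size $\ell$, then $\hat{\mathcal{H}}_{\ell}$ has no subhypergraph isomorphic to $\mathcal{F}$.
   Context: For a hypergraph $\mathcal{H}=(V,\mathcal{F}_0)$: an edge-induced subhypergraph is $(\bigcup_{F\in\mathcal{F}'}F,\mathcal{F}')$ for $\mathcal{F}'\subseteq\mathcal{F}_0$; a restriction is $(V',\{F\in\mathcal{F}_0\mid F\subseteq V'\})$ for $V'\subseteq V$; a subhypergraph is $(V',\{F\cap V'\mid F\in\mathcal{F}_0,\ F\cap V'\neq\emptyset\})$ for $V'\subseteq V$. $\hat{\mathcal{H}}^{m}=(V\cup\{x_1,\dots,x_m\},\{E\cup\{x_1,\dots,x_m\}\mid E\in\mathcal{F}_0\})$ with new vertices $x_1,\dots,x_m$. $\hat{\mathcal{H}}_{\ell}$ has vertex set $V\cup\{x\}$ with $x$ new and hyperedge set $\mathcal{F}_0\cup\{X\cup\{x\}\mid X\subseteq V,\ |X|=\ell\}$. *)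

(* Defs.v *)
From mathcomp Require Import all_boot.
Set Implicit Arguments. Unset Strict Implicit. Unset Printing Implicit Defensive.

Record hypergraph (T : finType) := Hypergraph {
  hverts : {set T};
  hedges : {set {set T}} }.

Definition wf_hypergraph (T : finType) (H : hypergraph T) : Prop :=
  forall e, e \in hedges H -> (e \subset hverts H) /\ e != set0.

Definition hiso (T1 T2 : finType) (H1 : hypergraph T1) (H2 : hypergraph T2) : Prop :=
  exists f : T1 -> T2,
    {in hverts H1 &, injective f} /\
    f @: hverts H1 = hverts H2 /\
    [set f @: e | e : {set T1} in hedges H1] = hedges H2.

Definition edge_induced (T : finType) (Fp : {set {set T}}) : hypergraph T :=
  Hypergraph (\bigcup_(e in Fp) e) Fp.

Definition restriction (T : finType) (H : hypergraph T) (V' : {set T}) : hypergraph T :=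
  Hypergraph V' [set e in hedges H | e \subset V'].

Definition subhypergraph (T : finType) (H : hypergraph T) (V' : {set T}) : hypergraph T :=
  Hypergraph V' [set e :&: V' | e : {set T} in hedges H & e :&: V' != set0].

(* \hat{H}^m : new vertices x_1..x_m (the inr part), added to every hyperedge. *)
Definition hat_up (T : finType) (H : hypergraph T) (m : nat) : hypergraph (T + 'I_m)%type :=
  Hypergraph (inl @: hverts H :|: [set inr i | i : 'I_m])
             [set (inl @: E) :|: [set inr i | i : 'I_m] | E : {set T} in hedges H].

(* \hat{H}_l : one new vertex x (= None), plus all hyperedges X ∪ {x} with
   X ⊆ V, |X| = l. *)
Definition hat_low (T : finType) (H : hypergraph T) (l : nat) : hypergraph (option T) :=
  Hypergraph (Some @: hverts H :|: [set None])
    ([set Some @: E | E : {set T} in hedges H] :|: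
     [set None |: (Some @: X) | X : {set T} in [set X : {set T} | (X \subset hverts H) && (#|X| == l)]]).

Definition n_edges_of_size (T : finType) (H : hypergraph T) (l : nat) : nat :=
  #|[set e in hedges H | #|e| == l]|.

(* Main.v *)
Require Import Defs.
From mathcomp Require Import all_boot.

Lemma hiso_card {T1 T2 : finType} {G : hypergraph T1} {F : hypergraph T2} :
  hiso G F -> #|hverts G| = #|hverts F|.
Proof. by case=> f [inj [im _]]; rewrite -im card_in_imset. Qed.

Lemma imset_inj_sub {T1 T2 : finType} {f : T1 -> T2} {V A B : {set T1}} :
  {in V &, injective f} -> A \subset V -> B \subset V -> f @: A = f @: B -> A = B.
Proof.
move=> inj sA sB e; apply/setP => x; apply/idP/idP => hx.
- have: f x \in f @: B by rewrite -e imset_f.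
  case/imsetP => y yB fxy.
  by rewrite (inj x y (subsetP sA x hx) (subsetP sB y yB) fxy).
- have: f x \in f @: A by rewrite e imset_f.
  case/imsetP => y yA fxy.
  by rewrite (inj x y (subsetP sB x hx) (subsetP sA y yA) fxy).
Qed.

Lemma some_preim {T : finType} (A : {set option T}) :
  None \notin A -> A = Some @: [set x | Some x \in A].
Proof.
move=> hN; apply/setP => [[x|]].
- by rewrite mem_imset ?inE //; exact: Some_inj.
- rewrite (negbTE hN); apply/esym/negP; by case/imsetP.
Qed.

Lemma card_some {T : finType} (A : {set T}) : #|Some @: A| = #|A|.
Proof. by rewrite card_imset //; exact: Some_inj. Qed.

Lemma card_inr {T : finType} m : #|[set (@inr T 'I_m) i | i : 'I_m]| = m.
Proof. by rewrite card_imset ?card_ord //; exact: inr_inj. Qed.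

Theorem lemma7 (TF TH : finType) (F : hypergraph TF) (H : hypergraph TH) (k : nat) :
  wf_hypergraph F -> wf_hypergraph H ->
  0 < k -> #|hverts F| = k -> k <= #|hverts H| ->
  (* (1) *)
  (~ exists Fp : {set {set (TH + 'I_k.+1)%type}},
       Fp \subset hedges (hat_up H k.+1) /\ hiso (edge_induced Fp) F) /\
  (* (2) *)
  (hedges F != set0 ->
   ~ exists V' : {set (TH + 'I_k.+1)%type},
       V' \subset hverts (hat_up H k.+1) /\ hiso (restriction (hat_up H k.+1) V') F) /\
  (* (3) *)
  (forall l : nat, 1 <= l <= k -> n_edges_of_size F l < 'C(k.-1, l.-1) ->
   ~ exists V' : {set option TH},
       V' \subset hverts (hat_low H l) /\ hiso (subhypergraph (hat_low H l) V') F).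
Proof.
move=> _ _ k0 cF cH; split; [|split].
- case=> Fp [sFp iso].
  have := hiso_card iso; rewrite cF /=.
  case: (set_0Vmem Fp) => [->|[e eF]].
  + by rewrite big_set0 cards0 => h; rewrite -h in k0.
  + have: e \in hedges (hat_up H k.+1) by apply: (subsetP sFp).
    case/imsetP => E _ eE.
    move=> h.
    have: #|[set (@inr TH 'I_k.+1) i | i : 'I_k.+1]| <= #|\bigcup_(e0 in Fp) e0|.
      apply: subset_leq_card; apply: subset_trans (bigcup_sup _ eF).
      by rewrite eE subsetUr.
    by rewrite card_inr h ltnn.
- move=> hF [V' [sV iso]].
  have := hiso_card iso; rewrite cF /= => h.
  case: iso => f [_ [_ ime]].
  have : [set f @: e | e : {set _} in hedges (restriction (hat_up H k.+1) V')] != set0.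
    by rewrite ime.
  case/set0Pn => e' /imsetP [e eR _].
  move: eR; rewrite inE => /andP [/imsetP [E _ ->] sub].
  have: #|[set (@inr TH 'I_k.+1) i | i : 'I_k.+1]| <= #|V'|.
    apply: subset_leq_card; apply: subset_trans sub.
    by rewrite subsetUr.
  by rewrite card_inr h ltnn.
- move=> l /andP [l1 lk] hlt [V' [sV iso]].
  have cV : #|V'| = k by rewrite -cF; exact: hiso_card iso.
  set S := subhypergraph (hat_low H l) V'.
  have memS : forall X : {set TH}, X \subset hverts H -> #|X| = l ->
      forall B, B != set0 -> (None |: Some @: X) :&: V' = B -> B \in hedges S.
    move=> X sX cX B nB eB; apply/imsetP; exists (None |: Some @: X).
      rewrite !inE; apply/andP; split.
        apply/orP; right; apply/imsetP; exists X => //.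
        by rewrite inE sX cX eqxx.
      by rewrite eB.
    by rewrite eB.
  have key : exists2 p, p \in V' & forall Y : {set option TH}, Y \subset V' :\ p -> #|Y| = l.-1 ->
      p |: Y \in hedges S.
    have inH : forall x, Some x \in V' -> x \in hverts H.
      move=> x /(subsetP sV); rewrite /= !inE (mem_imset _ _ (@Some_inj _)).
      by case/orP.
    case hN: (None \in V').
    + exists None => // Y sY cY.
      have YN : None \notin Y by apply/negP => /(subsetP sY); rewrite !inE eqxx.
      set W := [set x | Some x \in V' :\ None].
      have cW : #|W| = k.-1.
        rewrite -card_some -some_preim ?(inE, eqxx) //.
        by move: cV; rewrite (cardsD1 None V') hN add1n => <-.
      have sWH : W \subset hverts H.
        by apply/subsetP => x; rewrite !inE => /inH.
      have : ~~ (hverts H \subset W).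
        apply/negP => /subset_leq_card; rewrite cW => h.
        by have := leq_trans cH h; rewrite -{1}(prednK k0) ltnn.
      case/subsetPn => z zH zW.
      set Y0 := [set x | Some x \in Y].
      have eY : Y = Some @: Y0 by apply: some_preim.
      have sY0W : Y0 \subset W.
        by apply/subsetP => x; rewrite !inE => /(subsetP sY); rewrite !inE.
      have hz : Some z \notin V'.
        by apply/negP => hz; move: zW; rewrite !inE hz.
      have hzY : Some z \notin Y.
        by apply/negP => /(subsetP sY); rewrite !inE (negbTE hz) andbF.
      apply: (memS (z |: Y0)).
      * by rewrite subUset sub1set zH (subset_trans sY0W sWH).
      * have zY0 : z \notin Y0 by apply/negP => /(subsetP sY0W); rewrite (negbTE zW).
        rewrite cardsU1 zY0 -(card_some Y0) -eY cY add1n prednK //.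
      * by apply/set0Pn; exists None; rewrite !inE eqxx.
      * apply/setP => [[x|]]; rewrite !inE; last by rewrite hN.
        rewrite (mem_imset _ _ (@Some_inj _)) !inE.
        case: (x =P z) => [->|_] /=.
          by rewrite (negbTE hz) (negbTE hzY).
        case hy: (Some x \in Y) => //=.
        by move: (subsetP sY _ hy); rewrite !inE => /andP [].
    + have : 0 < #|V'| by rewrite cV.
      rewrite card_gt0 => /set0Pn [p pV]; exists p => // Y sY cY.
      have pY : p \notin Y.
        by apply/negP => /(subsetP sY); rewrite !inE eqxx.
      have sB : p |: Y \subset V'.
        rewrite subUset sub1set pV /=; exact: subset_trans sY (subsetDl _ _).
      have NB : None \notin p |: Y.
        by apply/negP => /(subsetP sB); rewrite hN.
      have eB := some_preim _ NB.
      apply: (memS [set x | Some x \in p |: Y]).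
      * apply/subsetP => x; rewrite inE => /(subsetP sB); exact: inH.
      * by rewrite -card_some -eB cardsU1 pY cY add1n prednK.
      * by apply/set0Pn; exists p; rewrite !inE eqxx.
      * rewrite -eB; apply/setP => x; rewrite !inE.
        case: (x =P None) => [->|_] /=.
          by rewrite hN; move: NB; rewrite !inE => /negbTE ->.
        case hx: ((x == p) || (x \in Y)) => //=.
        by apply: (subsetP sB); rewrite !inE hx.
  case: key => p pV key.
  have cD : #|[set Y : {set option TH} | Y \subset V' :\ p & #|Y| == l.-1]| = 'C(k.-1, l.-1).
    by rewrite cards_draws; move: cV; rewrite (cardsD1 p V') pV add1n => <-.
  case: iso => f [inj [_ ime]].
  have sub : forall Y, Y \in [set Y : {set option TH} | Y \subset V' :\ p & #|Y| == l.-1] ->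
      p |: Y \subset V' /\ p \notin Y /\ #|p |: Y| = l.
    move=> Y; rewrite inE => /andP [sY /eqP cY].
    have pY : p \notin Y.
      by apply/negP => /(subsetP sY); rewrite !inE eqxx.
    split; last split => //.
      rewrite subUset sub1set pV /=; exact: subset_trans sY (subsetDl _ _).
    by rewrite cardsU1 pY cY add1n prednK.
  have: #|[set f @: (p |: Y) | Y in [set Y : {set option TH} | Y \subset V' :\ p & #|Y| == l.-1]]|
        <= n_edges_of_size F l.
    apply: subset_leq_card; apply/subsetP => e /imsetP [Y YD ->].
    have [sY [pY cY]] := sub Y YD.
    rewrite inE; apply/andP; split.
      rewrite -ime; apply: imset_f; apply: key.
        by move: YD; rewrite inE => /andP [].
      by move: YD; rewrite inE => /andP [_ /eqP].
    rewrite card_in_imset ?cY //.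
    by move=> a b ha hb; apply: inj; apply: (subsetP sY).
  rewrite card_in_imset ?cD; first by rewrite leqNgt hlt.
  move=> Y1 Y2 D1 D2 e.
  have [s1 [p1 _]] := sub Y1 D1.
  have [s2 [p2 _]] := sub Y2 D2.
  have := imset_inj_sub inj s1 s2 e => e'.
  by rewrite -(setU1K p1) -(setU1K p2) e'.
Qed.
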